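(* If $X \subset S^{\mathbb{Z}}$ is a one-dimensional sofic shift, then its Cantor–Bendixson derivative $X^{(1)}$ is also a sofic shift.
   Context: A one-dimensional subshift over a finite alphabet $S$ is a closed, shift-invariant subset of $S^{\mathbb{Z}}$. A sofic shift is the image of a subshift of finite type (a subshift defined by a finite set of forbidden words) under a block map (a continuous shift-commuting map). The Cantor–Bendixson derivative $X^{(1)} = X'$ is the set of non-isolated points of $X$, i.e. $\{x \in X \mid x \in \overline{X \setminus \{x\}}\}$. *)

(* Defs.v *)
From mathcomp Require Import all_boot.
From Stdlib Require Import ZArith.

Set Implicit Arguments.
Unset Strict Implicit.
Unset Printing Implicit Defensive.

Definition config (S : Type) := Z -> S.
Definition cset (S : Type) := config S -> Prop.

Definition shift (S : Type) (x : config S) : config S := fun i => x (i + 1)%Z.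

Definition agree (S : Type) (n : nat) (x y : config S) : Prop :=
  forall i : Z, (Z.abs i <= Z.of_nat n)%Z -> x i = y i.

(* Product topology (S discrete), written via cylinder neighbourhoods. *)
Definition closed_set (S : Type) (X : cset S) : Prop :=
  forall x, (forall n, exists y, X y /\ agree n x y) -> X x.

Definition shift_invariant (S : Type) (X : cset S) : Prop :=
  (forall x, X x -> X (shift x)) /\
  (forall y, X y -> exists x, X x /\ (forall i, shift x i = y i)).

Definition subshift (S : Type) (X : cset S) : Prop :=
  closed_set X /\ shift_invariant X.

Fixpoint occurs_at (S : Type) (x : config S) (i : Z) (w : seq S) : Prop :=
  match w with
  | [::] => True
  | a :: w' => x i = a /\ occurs_at x (i + 1)%Z w'
  end.

Definition SFT (A : finType) (Y : cset A) : Prop :=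
  exists F : seq (seq A),
    forall y, Y y <-> (forall w, w \in F -> forall i, ~ occurs_at y i w).

Definition continuous_map (A S : Type) (phi : config A -> config S) : Prop :=
  forall (x : config A) (n : nat), exists m : nat,
    forall y, agree m x y -> agree n (phi x) (phi y).

Definition block_map (A S : Type) (phi : config A -> config S) : Prop :=
  continuous_map phi /\ (forall x i, phi (shift x) i = shift (phi x) i).

Definition sofic (S : finType) (X : cset S) : Prop :=
  exists (A : finType) (Y : cset A) (phi : config A -> config S),
    SFT Y /\ block_map phi /\
    (forall x, X x <-> exists y, Y y /\ (forall i, phi y i = x i)).

Definition CB_derivative (S : Type) (X : cset S) : cset S :=
  fun x => X x /\
    forall n : nat, exists y, X y /\ (exists j, y j <> x j) /\ agree n x y.

(* Main.v *)
From Stdlib Require Import ZArith Lia ClassicalEpsilon Classical FunctionalExtensionality.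
From mathcomp Require Import all_boot zify.
Require Import Defs.

Set Implicit Arguments.
Unset Strict Implicit.
Unset Printing Implicit Defensive.



Definition pb (P : Prop) : bool := if excluded_middle_informative P then true else false.
Lemma pbE (P : Prop) : pb P = true <-> P.
Proof. rewrite /pb; case: excluded_middle_informative => //. Qed.

Definition tr (A : Type) (k : Z) (y : config A) : config A := fun i => y (i + k)%Z.
Definition agree' (A : Type) (n : nat) (x y : config A) : Prop :=
  forall i : Z, (Z.abs i < Z.of_nat n)%Z -> x i = y i.

Lemma fin_bound (T : finType) (P : nat -> T -> Prop) :
  (forall N N' t, N <= N' -> P N t -> P N' t) ->
  (forall t, exists N, P N t) -> exists N, forall t, P N t.
Proof.
move=> Hm Hall.
suff: forall s : seq T, exists N, forall t, t \in s -> P N t.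
  by case/(_ (enum T)) => N HN; exists N => t; apply: HN; rewrite mem_enum.
elim=> [|a s [N HN]]; first by exists 0.
have [Na Ha] := Hall a.
exists (maxn N Na) => t; rewrite inE => /orP [/eqP->|Ht].
  by apply: (Hm Na); first by apply: leq_maxr.
by apply: (Hm N); [apply: leq_maxl | apply: HN].
Qed.

Lemma pigeon (T : finType) (Q : nat -> T -> Prop) :
  (forall n m t, n <= m -> Q m t -> Q n t) ->
  (forall n, exists t, Q n t) -> exists t, forall n, Q n t.
Proof.
move=> Hm Hall; apply: NNPP => Hno.
have H1 : forall t, exists N, ~ Q N t.
  move=> t; apply: NNPP => H; apply: Hno; exists t => n.
  by apply: NNPP => Hn; apply: H; exists n.
have [N HN] := fin_bound (P := fun N t => ~ Q N t)
   (fun N N' t le H HQ => H (Hm _ _ _ le HQ)) H1.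
by have [t Ht] := Hall N; apply: (HN t).
Qed.

Lemma pigeon_inf (T : finType) (P : nat -> Prop) (f : nat -> T) :
  (forall N, exists k, N <= k /\ P k) ->
  exists t, forall N, exists k, N <= k /\ P k /\ f k = t.
Proof.
move=> H.
have := @pigeon T (fun N t => exists k, N <= k /\ P k /\ f k = t).
case.
- move=> n m t le [k [Hk [Pk fk]]]; exists k; split=> //; exact: leq_trans Hk.
- move=> n; have [k [Hk Pk]] := H n; exists (f k), k; done.
by move=> t Ht; exists t.
Qed.

Section Cluster.
Variable A : finType.
Variable z : nat -> config A.

Definition inf_ag (c : config A) (n : nat) :=
  forall N, exists k, N <= k /\ agree' n c (z k).

Lemma cl_step c n : inf_ag c n -> exists c', agree' n c c' /\ inf_ag c' n.+1.
Proof.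
move=> H.
have [t Ht] := pigeon_inf (fun k => (z k (- Z.of_nat n)%Z, z k (Z.of_nat n))) H.
have [k0 [_ [Hk0 Ek0]]] := Ht 0.
exists (z k0); split => // N.
have [k [Hk [Ak Ek]]] := Ht N.
exists k; split => // i Hi.
have [Hi'|Hi'] : (Z.abs i < Z.of_nat n \/ Z.abs i = Z.of_nat n)%Z by lia.
  by rewrite -(Hk0 i Hi') (Ak i Hi').
rewrite -Ek in Ek0; case: Ek0 => E1 E2.
have [->|->] : (i = - Z.of_nat n \/ i = Z.of_nat n)%Z by lia.
  by rewrite E1.
by rewrite E2.
Qed.

Lemma cl_base : inf_ag (z 0) 0.
Proof. move=> N; exists N; split => // i Hi; lia. Qed.

Fixpoint cs (n : nat) : {c : config A | inf_ag c n} :=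
  match n with
  | 0 => exist _ (z 0) cl_base
  | m.+1 => let: exist c h := cs m in
      exist _ (proj1_sig (constructive_indefinite_description _ (cl_step h)))
              (proj2 (proj2_sig (constructive_indefinite_description _ (cl_step h))))
  end.

Lemma cs_coh n m : n <= m -> agree' n (proj1_sig (cs n)) (proj1_sig (cs m)).
Proof.
elim: m => [|m IH]; first by rewrite leqn0 => /eqP->.
rewrite leq_eqVlt => /orP [/eqP->|]; first by [].
rewrite ltnS => Hnm; have H := IH Hnm; move=> i Hi.
rewrite (H i Hi) /=.
case: (cs m) => c h /=.
case: (constructive_indefinite_description _ _) => c' [Hc' _] /=.
apply: Hc'; lia.
Qed.

Definition climit : config A :=
  fun i => proj1_sig (cs (Z.to_nat (Z.abs i)).+1) i.

Lemma cluster : forall n N, exists k, N <= k /\ agree' n climit (z k).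
Proof.
move=> n N.
have [k [Hk Ak]] := proj2_sig (cs n) N.
exists k; split => // i Hi; rewrite -Ak // /climit.
have [le|lt] := leqP (Z.to_nat (Z.abs i)).+1 n.
  by rewrite (cs_coh le) //; lia.
lia.
Qed.
End Cluster.



Lemma chl (A S : finType) (phi : config A -> config S) :
  continuous_map phi ->
  exists r : nat, forall y y', agree r y y' -> phi y 0%Z = phi y' 0%Z.
Proof.
move=> Hc; apply: NNPP => Hno.
have H1 : forall r : nat, exists p : config A * config A,
    agree r p.1 p.2 /\ phi p.1 0%Z <> phi p.2 0%Z.
  move=> r; apply: NNPP => H; apply: Hno; exists r => y y' Ha.
  apply: NNPP => Hne; apply: H; by exists (y, y').
pose q r := proj1_sig (constructive_indefinite_description _ (H1 r)).
have Hq r : agree r (q r).1 (q r).2 /\ phi (q r).1 0%Z <> phi (q r).2 0%Z.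
  exact: (proj2_sig (constructive_indefinite_description _ (H1 r))).
pose zz r : config (A * A)%type := fun i => ((q r).1 i, (q r).2 i).
pose p := climit zz.
pose y := fun i => (p i).1.
have [m Hm] := Hc y 0.
have [k [Hk Ak]] := cluster zz m.+1 m.
have [Hqa Hqb] := Hq k.
have E1 : agree m y (q k).1.
  move=> i Hi; rewrite /y /p (Ak i) //; lia.
have E2 : agree m y (q k).2.
  move=> i Hi; rewrite (E1 i Hi); apply: Hqa; lia.
apply: Hqb.
have := Hm _ E1 0%Z ltac:(lia); have := Hm _ E2 0%Z ltac:(lia).
by move=> <- <-.
Qed.

Lemma shift_tr (A S : Type) (phi : config A -> config S) :
  block_map phi -> forall k y i, phi (tr k y) i = phi y (i + k)%Z.
Proof.
move=> [_ Hs].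
have Hpos : forall (n : nat) y i, phi (tr (Z.of_nat n) y) i = phi y (i + Z.of_nat n)%Z.
  elim=> [|n IH] y i.
    have -> : tr (Z.of_nat 0) y = y by apply: functional_extensionality => j; rewrite /tr Z.add_0_r.
    by rewrite Z.add_0_r.
  have -> : tr (Z.of_nat n.+1) y = shift (tr (Z.of_nat n) y).
    apply: functional_extensionality => j; rewrite /tr /shift; congr y; lia.
  rewrite Hs /shift IH; congr phi; lia.
move=> k y i.
case: (Z_le_gt_dec 0 k) => Hk.
  have -> : k = Z.of_nat (Z.to_nat k) by lia.
  by apply: Hpos.
have Hy : y = tr (Z.of_nat (Z.to_nat (- k))) (tr k y).
  apply: functional_extensionality => j; rewrite /tr; congr y; lia.
rewrite [in RHS]Hy Hpos; congr phi; lia.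
Qed.

Lemma loc_of_block (A S : finType) (phi : config A -> config S) :
  block_map phi -> exists r : nat, forall y y' i,
    (forall k, (Z.abs (k - i) <= Z.of_nat r)%Z -> y k = y' k) -> phi y i = phi y' i.
Proof.
move=> Hb; have [r Hr] := chl (proj1 Hb).
exists r => y y' i H.
have E := shift_tr Hb.
rewrite -[i]Z.add_0_l -!E; apply: Hr => k Hk; rewrite /tr; apply: H; lia.
Qed.


Lemma occurs_tr (A : Type) (y : config A) k w i :
  occurs_at (tr k y) i w <-> occurs_at y (i + k)%Z w.
Proof.
elim: w i => [|a w IH] i //=.
rewrite IH /tr.
have -> : (i + 1 + k = i + k + 1)%Z by lia.
done.
Qed.

Lemma occurs_ext (A : Type) (y y' : config A) w i :
  (forall j, (i <= j < i + Z.of_nat (size w))%Z -> y j = y' j) ->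
  occurs_at y i w -> occurs_at y' i w.
Proof.
elim: w i => [|a w IH] i //= H [H1 H2]; split.
  by rewrite -H //; lia.
apply: IH => //; move=> j Hj; apply: H; lia.
Qed.

Definition splice (A : Type) (y z : config A) (c : Z) : config A :=
  fun k => if (k <? c)%Z then y k else z k.

Section SFTfacts.
Variable A : finType.
Variable F : seq (seq A).
Variable Y : cset A.
Hypothesis HY : forall y, Y y <-> (forall w, w \in F -> forall i, ~ occurs_at y i w).

Lemma sft_tr k y : Y y -> Y (tr k y).
Proof.
move/HY => H; apply/HY => w Hw i; rewrite occurs_tr; exact: H.
Qed.

Definition Lmax := \max_(w <- F) size w.

Lemma size_le w : w \in F -> size w <= Lmax.
Proof. move=> Hw; rewrite /Lmax; exact: (@leq_bigmax_seq _ _ _ (fun w => size w)). Qed.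

Lemma sft_splice y z c :
  Y y -> Y z -> (forall k, (c - Z.of_nat Lmax <= k <= c + Z.of_nat Lmax)%Z -> y k = z k) ->
  Y (splice y z c).
Proof.
move=> /HY Hy /HY Hz Hag; apply/HY => w Hw i Hocc.
have Hs : (Z.of_nat (@size A w) <= Z.of_nat Lmax)%Z by apply/inj_le/leP/size_le.
case: (Z_lt_le_dec i (c - Z.of_nat Lmax)) => Hi.
  apply: (Hy w Hw i); apply: (occurs_ext _ Hocc) => j Hj.
  rewrite /splice; have -> : (j <? c)%Z = true.
  apply/Z.ltb_lt; lia.
  done.
apply: (Hz w Hw i); apply: (occurs_ext _ Hocc) => j Hj.
rewrite /splice; case: (Z.ltb_spec j c) => Hjc //.
apply: Hag; lia.
Qed.

Lemma sft_closed : closed_set Y.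
Proof.
move=> x H; apply/HY => w Hw i Hocc.
have [y [Hy Ha]] := H (Z.to_nat (Z.abs i + Z.of_nat (@size A w))).
move/HY: Hy => Hy; apply: (Hy w Hw i); apply: (occurs_ext _ Hocc) => j Hj.
apply: Ha; lia.
Qed.
End SFTfacts.



Definition rt (S : Type) (Z : cset S) (x : config S) : Prop :=
  forall N : nat, exists n, N <= n /\ exists y, Z y /\ agree n x y /\
    exists j, (Z.of_nat n < j)%Z /\ y j <> x j.

Section Core.
Variables (A S : finType) (Y : cset A) (phi : config A -> config S) (L r : nat).
Hypothesis HYtr : forall k y, Y y -> Y (tr k y).
Hypothesis HYsp : forall y z c, Y y -> Y z ->
  (forall k, (c - Z.of_nat L <= k <= c + Z.of_nat L)%Z -> y k = z k) -> Y (splice y z c).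
Hypothesis HYcl : closed_set Y.
Hypothesis Hloc : forall y y' i,
  (forall k, (Z.abs (k - i) <= Z.of_nat r)%Z -> y k = y' k) -> phi y i = phi y' i.
Hypothesis Hsh : forall k y i, phi (tr k y) i = phi y (i + k)%Z.

Definition Xs : cset S := fun x => exists y, Y y /\ forall i, phi y i = x i.
Definition Rr := (r + L).+1.
Definition Blk := {ffun 'I_(2 * Rr).+1 -> A}.
Definition blk (i : Z) (y : config A) : Blk :=
  [ffun k : 'I_(2 * Rr).+1 => y (i - Z.of_nat Rr + Z.of_nat k)%Z].

Lemma blk_eq i y y' :
  (forall q, (i - Z.of_nat Rr <= q <= i + Z.of_nat Rr)%Z -> y q = y' q) -> blk i y = blk i y'.
Proof. move=> H; apply/ffunP => k; rewrite !ffunE; apply: H; have := ltn_ord k; lia. Qed.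

Definition consb (s t : Blk) : bool :=
  [forall k : 'I_(2 * Rr), s (inord k.+1) == t (inord k)].

Lemma cons_blk i y : consb (blk i y) (blk (i + 1) y).
Proof.
apply/forallP => k; rewrite !ffunE; have := ltn_ord k => Hk.
rewrite !inordK; try lia.
apply/eqP; congr y; lia.
Qed.

Lemma cons_agree z w m : consb (blk m z) (blk (m + 1) w) ->
  forall q, (m + 1 - Z.of_nat Rr <= q <= m + Z.of_nat Rr)%Z -> z q = w q.
Proof.
move=> H q Hq.
have Hk : (Z.to_nat (q - m - 1 + Z.of_nat Rr) < 2 * Rr)%N by lia.
move/forallP: H => /(_ (Ordinal Hk)) /eqP; rewrite !ffunE.
have E : nat_of_ord (Ordinal Hk) = Z.to_nat (q - m - 1 + Z.of_nat Rr) by [].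
rewrite E !inordK; try lia.
have -> : (m - Z.of_nat Rr + Z.of_nat (Z.to_nat (q - m - 1 + Z.of_nat Rr)).+1 = q)%Z by lia.
have -> : (m + 1 - Z.of_nat Rr + Z.of_nat (Z.to_nat (q - m - 1 + Z.of_nat Rr)) = q)%Z by lia.
by move=> ->.
Qed.

Definition occ (b : Blk) : Prop := exists y, Y y /\ blk 0 y = b.

Lemma blk_tr i y : blk 0 (tr i y) = blk i y.
Proof. apply/ffunP => k; rewrite !ffunE /tr; congr y; lia. Qed.

Lemma occ_blk i y : Y y -> occ (blk i y).
Proof. move=> Hy; exists (tr i y); split; [exact: HYtr | exact: blk_tr]. Qed.

Definition ext (b : Blk) : config A := fun k => b (inord (Z.to_nat (k + Z.of_nat Rr))).
Definition lab (b : Blk) : S := phi (ext b) 0%Z.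

Lemma phi_lab y i : phi y i = lab (blk i y).
Proof.
rewrite /lab; have := Hsh i y 0; rewrite Z.add_0_l => <-.
apply: Hloc => k Hk; rewrite /ext /tr ffunE inordK; last by rewrite /Rr; lia.
congr y; rewrite /Rr; lia.
Qed.

Lemma realize d p (c : nat -> Blk) :
  (forall k, k < d -> consb (c k) (c k.+1)) -> (forall k, k <= d -> occ (c k)) ->
  exists z, Y z /\ forall k, k <= d -> blk (p + Z.of_nat k) z = c k.
Proof.
elim: d => [|d IH] Hc Ho.
  have [y [Hy Hb]] := Ho 0 (leqnn 0).
  exists (tr (- p) y); split; first exact: HYtr.
  move=> k; rewrite leqn0 => /eqP ->; rewrite -Hb -blk_tr.
  apply/ffunP => j; rewrite !ffunE /tr; congr y; lia.
have [z [Hz Hb]] := IH (fun k Hk => Hc k (ltnW Hk)) (fun k Hk => Ho k (leqW Hk)).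
have [y [Hy Hyb]] := Ho d.+1 (leqnn _).
pose y2 := tr (- (p + Z.of_nat d.+1)) y.
have Hb2 : blk (p + Z.of_nat d.+1) y2 = c d.+1.
  rewrite -Hyb -blk_tr; apply/ffunP => j; rewrite !ffunE /y2 /tr; congr y; lia.
have Hcons : consb (blk (p + Z.of_nat d) z) (blk (p + Z.of_nat d + 1) y2).
  rewrite Hb //; have -> : (p + Z.of_nat d + 1 = p + Z.of_nat d.+1)%Z by lia.
  rewrite Hb2; exact: Hc.
have Hag := cons_agree Hcons.
exists (splice z y2 (p + Z.of_nat d + 1)); split.
  apply: HYsp => //; first exact: HYtr.
  move=> k Hk; apply: Hag; rewrite /Rr; lia.
move=> k Hk.
case: (ltnP d k) => Hdk.
  have -> : k = d.+1 by lia.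
  rewrite -Hb2; apply: blk_eq => q Hq; rewrite /splice.
  case: (Z.ltb_spec q (p + Z.of_nat d + 1)) => Hq' //.
  apply: Hag; lia.
rewrite -(Hb k Hdk); apply: blk_eq => q Hq; rewrite /splice.
case: (Z.ltb_spec q (p + Z.of_nat d + 1)) => Hq' //.
symmetry; apply: Hag; lia.
Qed.

Definition chain (c : nat -> Blk) (d : nat) : Prop :=
  (forall k, k < d -> consb (c k) (c k.+1)) /\ (forall k, k <= d -> occ (c k)).

Definition ReachDev (h : {set Blk}) : Prop :=
  exists d (c1 c2 : nat -> Blk), c1 0 \in h /\ c2 0 \in h /\ chain c1 d /\ chain c2 d /\
    lab (c1 d) <> lab (c2 d).

Definition Tc := ({set Blk} * S)%type.
Definition okset (h : {set Blk}) (s : S) : bool :=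
  [&& h != set0, pb (ReachDev h) & [forall b in h, pb (occ b) && (lab b == s)]].
Definition okT (u v : Tc) : bool :=
  [&& okset u.1 u.2, okset v.1 v.2 & [forall b in v.1, [exists a in u.1, consb a b]]].
Definition lblT (u : Tc) : S := u.2.


Section Back.
Variable w : config Tc.
Hypothesis Hw : forall i, okT (w i) (w (i + 1)%Z).
Let x : config S := fun i => lblT (w i).
Let h i := (w i).1.

Lemma h_ok i : okset (h i) (x i).
Proof. by have /and3P [] := Hw i. Qed.

Lemma h_ne i : exists b, b \in h i.
Proof. have /and3P [/set0Pn [b Hb] _ _] := h_ok i; by exists b. Qed.

Lemma h_occ i b : b \in h i -> occ b /\ lab b = x i.
Proof.
have /and3P [_ _ /forall_inP H] := h_ok i.
move=> /H /andP [/pbE Ho /eqP Hl]; done.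
Qed.

Lemma h_pred i b : b \in h (i + 1)%Z -> exists a, a \in h i /\ consb a b.
Proof.
have /and3P [_ _ /forall_inP H] := Hw i.
move=> /H /exists_inP [a Ha Hc]; by exists a.
Qed.

Lemma backtrace n : forall i b, b \in h i -> exists c : nat -> Blk, c n = b /\
  (forall k, k <= n -> c k \in h (i - Z.of_nat n + Z.of_nat k)%Z) /\
  (forall k, k < n -> consb (c k) (c k.+1)).
Proof.
elim: n => [|n IH] i b Hb.
  exists (fun _ => b); split => //; split => // k Hk.
  by have -> : (i - Z.of_nat 0 + Z.of_nat k = i)%Z by lia.
have Hb' : b \in h (i - 1 + 1)%Z by have -> : (i - 1 + 1 = i)%Z by lia.
have [a [Ha Hab]] := h_pred Hb'.
have [c [Hcn [Hcm Hcc]]] := IH _ _ Ha.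
exists (fun k => if k == n.+1 then b else c k); split; first by rewrite eqxx.
split.
  move=> k Hk; case: eqP => [->|Hne].
    by have -> : (i - Z.of_nat n.+1 + Z.of_nat n.+1 = i)%Z by lia.
  have -> : (i - Z.of_nat n.+1 + Z.of_nat k = i - 1 - Z.of_nat n + Z.of_nat k)%Z by lia.
  apply: Hcm; lia.
move=> k Hk; case: eqP => [E|_]; first by lia.
case: eqP => [E|E]; last by apply: Hcc; lia.
have -> : k = n by lia.
by rewrite Hcn.
Qed.

Lemma fwd_point (n d : nat) (c1 : nat -> Blk) : c1 0 \in h (Z.of_nat n) -> chain c1 d ->
  exists z, Y z /\ (forall q, (- Z.of_nat n <= q <= Z.of_nat n)%Z -> phi z q = x q) /\
    phi z (Z.of_nat n + Z.of_nat d)%Z = lab (c1 d).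
Proof.
move=> H0 [Hc1 Ho1].
have [cb [Hcbn [Hcbm Hcbc]]] := backtrace (n + n) H0.
pose e k := if k <= n + n then cb k else c1 (k - (n + n)).
have Hin k : k <= n + n -> cb k \in h (- Z.of_nat n + Z.of_nat k)%Z.
  move=> Hk; have := Hcbm k Hk.
  by have -> : (Z.of_nat n - Z.of_nat (n + n) + Z.of_nat k = - Z.of_nat n + Z.of_nat k)%Z by lia.
have [z [Hz Hzb]] : exists z, Y z /\ forall k, k <= n + n + d ->
    blk (- Z.of_nat n + Z.of_nat k)%Z z = e k.
  apply: realize.
  move=> k Hk; rewrite /e.
  case: (ltnP k (n + n)) => Hk1.
    have -> : (k <= n + n) = true by lia.
    exact: Hcbc.
  case: (eqVneq k (n + n)) => [->|Hne].
    rewrite leqnn.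
    rewrite Hcbn; have -> : ((n + n).+1 - (n + n) = 1)%N by lia.
    apply: (Hc1 0); lia.
  have -> : (k <= n + n) = false by lia.
  have -> : (k.+1 - (n + n) = (k - (n + n)).+1)%N by lia.
  apply: Hc1; lia.
  move=> k Hk; rewrite /e; case: ifP => Hk1.
    exact: (proj1 (h_occ (Hin k Hk1))).
  apply: Ho1; lia.
exists z; split => //; split.
  move=> q Hq.
  have Hk : (Z.to_nat (q + Z.of_nat n) <= n + n + d)%N by lia.
  have := Hzb _ Hk.
  have -> : (- Z.of_nat n + Z.of_nat (Z.to_nat (q + Z.of_nat n)) = q)%Z by lia.
  rewrite phi_lab => ->; rewrite /e ifT; last by lia.
  have Hq' : (Z.to_nat (q + Z.of_nat n) <= n + n)%N by lia.
  have := h_occ (Hin _ Hq').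
  have -> : (- Z.of_nat n + Z.of_nat (Z.to_nat (q + Z.of_nat n)) = q)%Z by lia.
  by case.
have := Hzb (n + n + d) (leqnn _).
have -> : (- Z.of_nat n + Z.of_nat (n + n + d) = Z.of_nat n + Z.of_nat d)%Z by lia.
rewrite phi_lab => ->; rewrite /e.
case: ifP => Hd.
  have Ed : d = 0%N by lia.
  by subst d; rewrite addn0 Hcbn.
by have -> : (n + n + d - (n + n) = d)%N by lia.
Qed.

Lemma back_sound : CB_derivative Xs x.
Proof.
split.
  have Hz : forall n : nat, exists z, Y z /\
      forall q, (- Z.of_nat n <= q <= Z.of_nat n)%Z -> phi z q = x q.
    move=> n; have [b Hb] := h_ne (Z.of_nat n).
    have [|z [Hz [Hq _]]] := @fwd_point n 0 (fun _ => b) Hb.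
      split => // k _; exact: (proj1 (h_occ Hb)).
    by exists z.
  pose zs n := proj1_sig (constructive_indefinite_description _ (Hz n)).
  have Hzs n : Y (zs n) /\ forall q, (- Z.of_nat n <= q <= Z.of_nat n)%Z -> phi (zs n) q = x q.
    exact: (proj2_sig (constructive_indefinite_description _ (Hz n))).
  exists (climit zs); split.
    apply: HYcl => m.
    have [k [_ Ak]] := cluster zs m.+1 0.
    exists (zs k); split; first exact: (proj1 (Hzs k)).
    move=> i Hi; apply: Ak; lia.
  move=> i.
  have [k [Hk Ak]] := cluster zs (Z.to_nat (Z.abs i) + r).+1 (Z.to_nat (Z.abs i)).
  rewrite (Hloc (y' := zs k)); first by apply: (proj2 (Hzs k)); lia.
  move=> q Hq; apply: Ak; lia.
move=> n.
have /and3P [_ /pbE [d [c1 [c2 [H1 [H2 [Hc1 [Hc2 Hne]]]]]]] _] := h_ok (Z.of_nat n).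
have [z1 [Hz1 [Hq1 He1]]] := fwd_point H1 Hc1.
have [z2 [Hz2 [Hq2 He2]]] := fwd_point H2 Hc2.
have Hag z : (forall q, (- Z.of_nat n <= q <= Z.of_nat n)%Z -> phi z q = x q) ->
    agree n x (phi z).
  move=> H q Hq; symmetry; apply: H; lia.
case: (classic (phi z1 (Z.of_nat n + Z.of_nat d)%Z = x (Z.of_nat n + Z.of_nat d)%Z)) => E.
  exists (phi z2); split; first by exists z2.
  split; last exact: Hag.
  exists (Z.of_nat n + Z.of_nat d)%Z; rewrite -E He1 He2 => H; apply: Hne; by rewrite H.
exists (phi z1); split; first by exists z1.
split; last exact: Hag.
by exists (Z.of_nat n + Z.of_nat d)%Z.
Qed.

End Back.

Section Fwd.
Variable x : config S.
Variable y0 : config A.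
Hypothesis Hy0 : Y y0.
Hypothesis Hx : forall i, phi y0 i = x i.
Hypothesis Hrt : rt Xs x.

Definition Gm (n : nat) (i : Z) (b : Blk) : Prop :=
  exists z, Y z /\ blk i z = b /\ forall k, (- Z.of_nat n <= k <= i)%Z -> phi z k = x k.

Definition Hs (i : Z) : {set Blk} := [set b | pb (forall n, Gm n i b)].

Lemma Hs_mem i b : b \in Hs i <-> forall n, Gm n i b.
Proof. rewrite inE; exact: pbE. Qed.

Lemma F1 i : blk i y0 \in Hs i.
Proof. apply/Hs_mem => n; exists y0; split => //; split => // k _; exact: Hx. Qed.

Lemma F2 i b : b \in Hs i -> occ b /\ lab b = x i.
Proof.
move/Hs_mem/(_ (Z.to_nat (Z.abs i))) => [z [Hz [Hb Hk]]].
split; first by rewrite -Hb; exact: occ_blk.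
by rewrite -Hb -phi_lab; apply: Hk; lia.
Qed.

Lemma F3 i b : b \in Hs (i + 1)%Z -> exists a, a \in Hs i /\ consb a b.
Proof.
move/Hs_mem => Hb.
pose Q := (fun n a => exists z, Y z /\ blk (i + 1) z = b /\ blk i z = a /\
   forall k, (- Z.of_nat n <= k <= i + 1)%Z -> phi z k = x k).
have [a Ha] : exists a, forall n, Q n a.
  apply: (@pigeon Blk Q).
- move=> n m a le [z [Hz [E1 [E2 Hk]]]]; exists z; do 3 split => //.
  move=> k Hk'; apply: Hk; lia.
- move=> n; have [z [Hz [E1 Hk]]] := Hb n; exists (blk i z), z; done.
exists a; split.
  apply/Hs_mem => n; have [z [Hz [E1 [E2 Hk]]]] := Ha n.
  exists z; do 2 split => //; move=> k Hk'; apply: Hk; lia.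
have [z [Hz [E1 [E2 _]]]] := Ha 0; rewrite -E1 -E2; exact: cons_blk.
Qed.

Lemma F4 i : ReachDev (Hs i).
Proof.
pose Q := (fun n b => exists z, Y z /\ blk i z = b /\
   (forall k, (- Z.of_nat n <= k <= i)%Z -> phi z k = x k) /\
   exists j, (i <= j)%Z /\ phi z j <> x j).
have [b Hb] : exists b, forall n, Q n b.
  apply: (@pigeon Blk Q).
- move=> n m b le [z [Hz [E1 [Hk Hj]]]]; exists z; do 2 split => //; split => //.
  move=> k Hk'; apply: Hk; lia.
- move=> n.
  have [n' [Hn' [y [[z [Hz Ez]] [Ha [j [Hj Hyj]]]]]]] := Hrt (n + Z.to_nat (Z.abs i)).
  exists (blk i z), z; split => //; split => //; split.
    move=> k Hk; rewrite Ez; symmetry; apply: Ha; lia.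
  by exists j; split; [lia | rewrite Ez].
have HbH : b \in Hs i.
  apply/Hs_mem => n; have [z [Hz [E1 [Hk _]]]] := Hb n; by exists z.
have [z [Hz [E1 [_ [j [Hij Hj]]]]]] := Hb 0.
exists (Z.to_nat (j - i)), (fun k => blk (i + Z.of_nat k) z), (fun k => blk (i + Z.of_nat k) y0).
split; first by rewrite Z.add_0_r E1.
split; first by rewrite Z.add_0_r; exact: F1.
have Hch y : Y y -> chain (fun k => blk (i + Z.of_nat k) y) (Z.to_nat (j - i)).
  move=> Hy; split => k _; last exact: occ_blk.
  have -> : (i + Z.of_nat k.+1 = i + Z.of_nat k + 1)%Z by lia.
  exact: cons_blk.
split; first exact: Hch.
split; first exact: Hch.
rewrite -!phi_lab.
have -> : (i + Z.of_nat (Z.to_nat (j - i)) = j)%Z by lia.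
by rewrite Hx.
Qed.

Definition wF (i : Z) : Tc := (Hs i, x i).

Lemma okset_Hs i : okset (Hs i) (x i).
Proof.
apply/and3P; split.
- by apply/set0Pn; exists (blk i y0); exact: F1.
- by apply/pbE; exact: F4.
apply/forall_inP => b /F2 [Ho Hl]; apply/andP; split; first by apply/pbE.
by apply/eqP.
Qed.

Lemma fwd_complete : (forall i, okT (wF i) (wF (i + 1)%Z)) /\ forall i, lblT (wF i) = x i.
Proof.
split => // i; apply/and3P; split; try exact: okset_Hs.
apply/forall_inP => b /F3 [a [Ha Hc]]; apply/exists_inP; by exists a.
Qed.
End Fwd.

Theorem core_thm : exists (T : finType) (ok : T -> T -> bool) (lbl : T -> S),
  (forall w : config T, (forall i, ok (w i) (w (i + 1)%Z)) ->
     CB_derivative Xs (fun i => lbl (w i))) /\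
  (forall x, CB_derivative Xs x -> rt Xs x ->
     exists w : config T, (forall i, ok (w i) (w (i + 1)%Z)) /\ forall i, lbl (w i) = x i).
Proof.
exists ({set Blk} * S)%type, okT, lblT; split.
  move=> w Hw; exact: back_sound.
move=> x HX Hrt; case: HX => [[y0 [Hy0 Hx]] _].
exists (wF x); exact: (fwd_complete Hy0 Hx Hrt).
Qed.

End Core.




Definition rev (T : Type) (x : config T) : config T := fun i => x (- i)%Z.

Lemma revK (T : Type) (x : config T) : rev (rev x) = x.
Proof. apply: functional_extensionality => i; rewrite /rev Z.opp_involutive. done. Qed.

Lemma rev_tr (T : Type) k (y : config T) : rev (tr k y) = tr (- k) (rev y).
Proof. apply: functional_extensionality => i; rewrite /rev /tr; congr y; lia. Qed.

Lemma rev_splice (T : Type) (y z : config T) c : rev (splice y z c) = splice (rev z) (rev y) (1 - c).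
Proof.
apply: functional_extensionality => i; rewrite /rev /splice.
case: (Z.ltb_spec (- i) c); case: (Z.ltb_spec i (1 - c)) => // H1 H2; lia.
Qed.

Lemma sofic_of_rel (S T : finType) (ok : T -> T -> bool) (lbl : T -> S) (Z : cset S) :
  (forall x, Z x <-> exists w : config T, (forall i, ok (w i) (w (i + 1)%Z)) /\ forall i, lbl (w i) = x i) ->
  sofic Z.
Proof.
move=> HZ.
exists T, (fun w => forall i, ok (w i) (w (i + 1)%Z)), (fun w i => lbl (w i)).
split.
  exists [seq [:: p.1; p.2] | p <- enum [pred p : T * T | ~~ ok p.1 p.2]] => y; split.
    move=> H u /mapP [p Hp ->] i /= [E1 [E2 _]].
    move: Hp; rewrite mem_enum inE -E1 -E2 H; done.
  move=> H i; apply: NNPP => /negP Hn.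
  apply: (H [:: y i; y (i + 1)%Z] _ i); last by split; [|split].
  by apply/mapP; exists (y i, y (i + 1)%Z) => //; rewrite mem_enum inE.
split.
  split; last done.
  move=> x n; exists n => y H i Hi /=; by rewrite H.
move=> x; rewrite HZ; split; move=> [w [H1 H2]]; by exists w.
Qed.

Lemma CB_ext (S : Type) (Z1 Z2 : cset S) : (forall x, Z1 x <-> Z2 x) ->
  forall x, CB_derivative Z1 x -> CB_derivative Z2 x.
Proof.
move=> H x [Hx Hn]; split; first by apply/H.
move=> n; have [y [Hy Hr]] := Hn n; exists y; split => //; exact/H.
Qed.

Lemma CB_rev (S : Type) (Z : cset S) x : CB_derivative Z x ->
  CB_derivative (fun y => Z (rev y)) (rev x).
Proof.
move=> [Hx Hn]; split; first by rewrite revK.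
move=> n; have [y [Hy [[j Hj] Ha]]] := Hn n.
exists (rev y); split; first by rewrite revK.
split; first by exists (- j)%Z; rewrite /rev Z.opp_involutive.
move=> i Hi; rewrite /rev; apply: Ha; lia.
Qed.

Lemma rt_ext (S : Type) (Z1 Z2 : cset S) : (forall x, Z1 x <-> Z2 x) ->
  forall x, rt Z1 x -> rt Z2 x.
Proof.
move=> H x Hr N; have [n [Hn [y [Hy Hr']]]] := Hr N; exists n; split => //; exists y; split => //.
exact/H.
Qed.

Lemma rt_or (S : Type) (Z : cset S) x : CB_derivative Z x ->
  rt Z x \/ rt (fun y => Z (rev y)) (rev x).
Proof.
move=> [Hx Hn]; case: (classic (rt Z x)) => Hr; [by left | right].
have [N0 HN0] : exists N0, forall n, N0 <= n -> ~ exists y, Z y /\ agree n x y /\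
    exists j, (Z.of_nat n < j)%Z /\ y j <> x j.
  apply: NNPP => H; apply: Hr => N; apply: NNPP => H'; apply: H; exists N => n Hn2 Hex.
  apply: H'; exists n; split => //.
move=> N; exists (maxn N N0); split; first exact: leq_maxl.
have [y [Hy [[j Hj] Ha]]] := Hn (maxn N N0).
have Hj' : (Z.of_nat (maxn N N0) < Z.abs j)%Z.
  apply: NNPP => Hc; apply: Hj; symmetry; apply: Ha; lia.
case: (Z_lt_le_dec 0 j) => Hj0.
  exfalso; apply: (HN0 (maxn N N0) (leq_maxr _ _)); exists y; do 2 split => //.
  by exists j; split => //; lia.
exists (rev y); split; first by rewrite revK.
split; first by move=> i Hi; rewrite /rev; apply: Ha; lia.
by exists (- j)%Z; split; [lia | rewrite /rev Z.opp_involutive].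
Qed.

Theorem corollary4 (S : finType) (X : cset S) :
  sofic X -> sofic (CB_derivative X).
Proof.
move=> [A [Y [phi [[F HF] [Hb HX]]]]].
have Htr := sft_tr HF.
have Hsp : forall y z c, Y y -> Y z ->
    (forall k, (c - Z.of_nat (Lmax F) <= k <= c + Z.of_nat (Lmax F))%Z -> y k = z k) ->
    Y (splice y z c).
  move=> y z c Hy Hz Ha; apply: (sft_splice HF Hy Hz Ha).
have Hcl := sft_closed HF.
have [r Hloc] := loc_of_block Hb.
have Hsh := shift_tr Hb.
have [T1 [ok1 [lbl1 [S1 C1]]]] := core_thm Htr Hsp Hcl Hloc Hsh.
pose Yr := fun y => Y (rev y).
pose phir := fun (y : config A) i => phi (rev y) (- i)%Z.
have Htr' : forall k y, Yr y -> Yr (tr k y).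
  by move=> k y; rewrite /Yr rev_tr; apply: Htr.
have Hsp' : forall y z c, Yr y -> Yr z ->
    (forall k, (c - Z.of_nat (Lmax F).+1 <= k <= c + Z.of_nat (Lmax F).+1)%Z -> y k = z k) ->
    Yr (splice y z c).
  move=> y z c Hy Hz Ha; rewrite /Yr rev_splice; apply: Hsp => // k Hk.
  rewrite /rev; symmetry; apply: Ha; lia.
have Hcl' : closed_set Yr.
  move=> x H; apply: Hcl => n; have [y [Hy Ha]] := H n; exists (rev y); split => //.
  move=> i Hi; rewrite /rev; apply: Ha; lia.
have Hloc' : forall y y' i, (forall k, (Z.abs (k - i) <= Z.of_nat r)%Z -> y k = y' k) ->
    phir y i = phir y' i.
  move=> y y' i H; apply: Hloc => k Hk; rewrite /rev; apply: H; lia.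
have Hsh' : forall k y i, phir (tr k y) i = phir y (i + k)%Z.
  move=> k y i; rewrite /phir rev_tr Hsh; congr phi; lia.
have [T2 [ok2 [lbl2 [S2 C2]]]] := core_thm Htr' Hsp' Hcl' Hloc' Hsh'.
have EX : forall x, X x <-> Xs Y phi x by move=> x; rewrite HX.
have EXr : forall x, Xs Yr phir x <-> Xs Y phi (rev x).
  move=> x; split.
    move=> [y [Hy Hy']]; exists (rev y); split => // i.
    change (rev x i) with (x (- i)%Z); rewrite -(Hy' (- i)%Z) /phir Z.opp_involutive //.
  move=> [y [Hy Hy']]; exists (rev y); split; first by rewrite /Yr revK.
  move=> i; rewrite /phir revK Hy'; change (x (- - i)%Z = x i); by rewrite Z.opp_involutive.
pose ok (u v : (T1 + T2)%type) : bool :=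
  match u, v with
  | inl a, inl b => ok1 a b
  | inr a, inr b => ok2 b a
  | _, _ => false
  end.
pose lbl (u : (T1 + T2)%type) : S := match u with inl a => lbl1 a | inr a => lbl2 a end.
apply: (@sofic_of_rel S _ ok lbl) => x; split.
  move=> /(CB_ext EX) Hx.
  case: (rt_or Hx) => Hr.
    have [w1 [Hw1 Hl1]] := C1 x Hx Hr.
    by exists (fun i => inl (w1 i)); split.
  have Hx' : CB_derivative (Xs Yr phir) (rev x).
    apply: (CB_ext (Z1 := fun y => Xs Y phi (rev y))); first by move=> y; rewrite EXr.
    exact: CB_rev.
  have Hr' : rt (Xs Yr phir) (rev x).
    by apply: (rt_ext (Z1 := fun y => Xs Y phi (rev y))) => // y; rewrite EXr.
  have [w2 [Hw2 Hl2]] := C2 _ Hx' Hr'.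
  exists (fun i => inr (w2 (- i)%Z)); split.
    move=> i /=; have := Hw2 (- (i + 1))%Z.
    by have -> : (- (i + 1) + 1 = - i)%Z by lia.
  by move=> i /=; rewrite Hl2 /rev Z.opp_involutive.
move=> [w [Hw Hl]].
pose f i := if w i is inl _ then true else false.
have Hf : forall i, f i = f (i + 1)%Z.
  move=> i; have := Hw i; rewrite /f /ok.
  by case: (w i) => a; case: (w (i + 1)%Z).
have Hf0 : forall i, f i = f 0%Z.
  have Hp : forall n : nat, f (Z.of_nat n) = f 0%Z /\ f (- Z.of_nat n)%Z = f 0%Z.
    elim=> [|n [IH1 IH2]]; first by [].
    split.
      rewrite -IH1 (Hf (Z.of_nat n)); congr f; lia.
    rewrite -IH2 (Hf (- Z.of_nat n.+1)%Z); congr f; lia.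
  move=> i; case: (Z_le_gt_dec 0 i) => Hi.
    have -> : i = Z.of_nat (Z.to_nat i) by lia.
    exact: (proj1 (Hp _)).
  have -> : i = (- Z.of_nat (Z.to_nat (- i)))%Z by lia.
  exact: (proj2 (Hp _)).
apply: (CB_ext (Z1 := Xs Y phi)); first by move=> y; rewrite EX.
case E0 : (w 0%Z) => [a0|a0].
  pose w1 i := if w i is inl a then a else a0.
  have Ew i : w i = inl (w1 i).
    have := Hf0 i; rewrite /f /w1 E0; by case: (w i).
  have Hw1 : forall i, ok1 (w1 i) (w1 (i + 1)%Z).
    by move=> i; have := Hw i; rewrite (Ew i) (Ew (i + 1)%Z).
  have := S1 w1 Hw1.
  have -> : (fun i => lbl1 (w1 i)) = x; last done.
  by apply: functional_extensionality => i; rewrite -Hl Ew.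
pose w2 i := if w (- i)%Z is inr a then a else a0.
have Ew i : w (- i)%Z = inr (w2 i).
  have := Hf0 (- i)%Z; rewrite /f /w2 E0; by case: (w (- i)%Z).
have Hw2 : forall i, ok2 (w2 i) (w2 (i + 1)%Z).
  move=> i; have := Hw (- (i + 1))%Z.
  have -> : (- (i + 1) + 1 = - i)%Z by lia.
  by rewrite (Ew i) (Ew (i + 1)%Z).
have := S2 w2 Hw2.
have -> : (fun i => lbl2 (w2 i)) = rev x.
  by apply: functional_extensionality => i; rewrite /rev -Hl Ew.
move=> /CB_rev; rewrite revK => H.
apply: (CB_ext (Z1 := fun y => Xs Yr phir (rev y))) => // y.
by rewrite EXr revK.
Qed.
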